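(* Let $\lambda=\{k_1,\dots,k_q\}$ be a partition of a positive integer $k$ and let $G$ be a graph. Then $G$ is $\lambda$-choosable if and only if $G$ is $L$-colourable for every special $\lambda$-assignment $L$ of $G$.
   Context: A partition of a positive integer $k$ is a finite multiset $\lambda=\{k_1,\dots,k_q\}$ of positive integers with $k_1+\dots+k_q=k$; the $k_i$ are its parts. An assignment $L$ of a graph $G$ assigns to each vertex $v$ a set $L(v)$ of colours; a $k$-assignment has $|L(v)|=k$ for all $v$; $G$ is $L$-colourable if there is a proper colouring $f$ with $f(v)\in L(v)$ for all $v$. A $\lambda$-assignment of $G$ is a $k$-assignment $L$ such that the colour set $\bigcup_{v\in V(G)}L(v)$ can be partitioned into sets $C_1,\dots,C_q$ (colour groups) with $|L(v)\cap C_i|=k_i$ for every vertex $v$ and every $i$. $G$ is $\lambda$-choosable if $G$ is $L$-colourable for every $\lambda$-assignment $L$. A $\lambda$-assignment $L$ with colour groups $C_1,\dots,C_q$ is special if $C_i$ is a singleton for every $i$ with $k_i=1$. *)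

(* Defs.v *)
From mathcomp Require Import all_boot.
Set Implicit Arguments. Unset Strict Implicit. Unset Printing Implicit Defensive.

(* A graph: vertex set V (a finType), adjacency relation adj (symmetric,
   irreflexive assumed in the theorem).
   A colour set L(v) is represented by a duplicate-free list of colours.
   A partition lambda = {k_1,...,k_q} is a list of positive parts (order
   irrelevant); k = sumn lambda, q = size lambda, k_i = nth 0 lambda i. *)

Section Colouring.
Variables (V : finType) (C : eqType).

Definition in_union (L : V -> seq C) (c : C) : Prop := exists v, c \in L v.

Definition k_assignment (k : nat) (L : V -> seq C) : Prop :=
  forall v, uniq (L v) /\ size (L v) = k.

(* g assigns to each colour of the union a group index; the colour groups are
   C_i = {c in union | g c = i}, i < q; they partition the union and
   |L(v) ∩ C_i| = k_i for all v and i. *)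
Definition colour_groups (lam : seq nat) (L : V -> seq C) (g : C -> nat) : Prop :=
  (forall c, in_union L c -> g c < size lam) /\
  (forall v i, i < size lam -> count (fun c => g c == i) (L v) = nth 0 lam i).

Definition lambda_assignment (lam : seq nat) (L : V -> seq C) : Prop :=
  k_assignment (sumn lam) L /\ exists g, colour_groups lam L g.

Definition special_lambda_assignment (lam : seq nat) (L : V -> seq C) : Prop :=
  k_assignment (sumn lam) L /\
  exists g, colour_groups lam L g /\
    forall i, i < size lam -> nth 0 lam i = 1 ->
      exists c0, forall c, (in_union L c /\ g c = i) <-> c = c0.

Definition L_colourable (adj : rel V) (L : V -> seq C) : Prop :=
  exists f : V -> C, (forall v, f v \in L v) /\
    (forall u v, adj u v -> f u != f v).

Definition lambda_choosable (adj : rel V) (lam : seq nat) : Prop :=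
  forall L : V -> seq C, lambda_assignment lam L -> L_colourable adj L.

End Colouring.

(* Main.v *)
Require Import Defs.
From mathcomp Require Import all_boot.

Lemma filter1_eq (T : eqType) (p : pred T) (s : seq T) x y :
  count p s = 1 -> x \in s -> p x -> y \in s -> p y -> x = y.
Proof.
rewrite -size_filter => H1 hx px hy py.
have: x \in filter p s by rewrite mem_filter px hx.
have: y \in filter p s by rewrite mem_filter py hy.
case: (filter p s) H1 => [|z [|]] //= _.
by rewrite !inE => /eqP -> /eqP ->.
Qed.

Theorem lemma1 (lam : seq nat) (Hparts : all (fun x => 0 < x) lam)
  (Hk : 0 < sumn lam)
  (V : finType) (adj : rel V) (Hsym : symmetric adj) (Hirr : irreflexive adj)
  (C : eqType) :
  lambda_choosable C adj lam <->
  (forall L : V -> seq C, special_lambda_assignment lam L -> L_colourable adj L).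
Proof.
split.
  by move=> H L [Hk' [g [Hg _]]]; apply: H; split => //; exists g.
move=> H L [HkL [g [Hg1 Hg2]]].
case: (pickP (fun _ : V => true)) => [v0 _|Hnone]; last first.
  by exists (fun v => False_rect C ((ltac:(by have := Hnone v)))); split => v; have := Hnone v.
have: size (L v0) = sumn lam by case: (HkL v0).
case Ev0: (L v0) => [|d s0]; first by move=> E; rewrite -E in Hk.
move=> _.
pose sp i := (i < size lam) && (nth 0 lam i == 1).
pose rep i := nth d (filter (fun c => g c == i) (L v0)) 0.
have reprop : forall i, sp i -> rep i \in L v0 /\ g (rep i) = i.
  move=> i /andP [hi /eqP h1].
  have := Hg2 v0 i hi; rewrite h1 -size_filter => hs.
  have : rep i \in filter (fun c => g c == i) (L v0).
    by apply: mem_nth; rewrite hs.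
  by rewrite mem_filter => /andP [/eqP -> ->].
pose phi c := if sp (g c) then rep (g c) else c.
have gphi : forall c, g (phi c) = g c.
  by move=> c; rewrite /phi; case: ifP => // /reprop [].
have inj : forall v, {in L v &, injective phi}.
  move=> v x y hx hy E.
  have gxy : g x = g y by rewrite -(gphi x) E gphi.
  move: E; rewrite /phi -gxy; case: ifP => // spx _.
  move: spx => /andP [hi /eqP h1].
  apply: (@filter1_eq C (fun c => g c == g x) (L v)) => //.
    by rewrite (Hg2 v _ hi).
  by rewrite gxy.
pose L' v := map phi (L v).
have Hin : forall c, in_union L' c -> exists v c'', c'' \in L v /\ c = phi c''.
  by move=> c [v /mapP [c'' h ->]]; exists v, c''.
have [f [f1 f2]] : L_colourable adj L'.
  apply: H; split.
    move=> v; case: (HkL v) => hu hs; split; last by rewrite size_map.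
    by rewrite map_inj_in_uniq //; apply: inj.
  exists g; split; first split.
  - move=> c /Hin [v [c'' [h ->]]]; rewrite gphi; apply: Hg1; by exists v.
  - move=> v i hi; rewrite -(Hg2 v i hi) count_map.
    by apply: eq_in_count => x _ /=; rewrite gphi.
  move=> i hi h1; exists (rep i) => c; split.
    case=> /Hin [v [c'' [h ->]]]; rewrite gphi => gi.
    by rewrite /phi gi /sp hi h1 eqxx.
  have spi : sp i by rewrite /sp hi h1 eqxx.
  move=> ->; case: (reprop _ spi) => hr gr; split => //.
  exists v0; apply/mapP; exists (rep i) => //.
  by rewrite /phi gr spi.
exists (fun v => nth d (L v) (index (f v) (L' v))); split.
  move=> v; apply: mem_nth; rewrite -(size_map phi) index_mem; exact: f1.
have key : forall v, phi (nth d (L v) (index (f v) (L' v))) = f v.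
  move=> v; have hf := f1 v.
  have hi : index (f v) (L' v) < size (L v) by rewrite -(size_map phi) index_mem.
  rewrite -(nth_map d d phi hi); exact: nth_index.
move=> u v huv; apply/negP => /eqP E.
by move: (f2 u v huv); rewrite -key E key eqxx.
Qed.
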